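(* Let $m\neq n$ be positive integers and let $g,h\in\mathrm{Homeo}_+(S^1)$ satisfy $gh^mg^{-1}=h^n$. Then $h$ has a periodic point whose period divides $|n-m|$.
   Context: $\mathrm{Homeo}_+(S^1)$ is the group of orientation-preserving homeomorphisms of $S^1$. *)

(* Defs.v *)
(* The circle S^1 is modelled as R/Z, represented by [0,1). *)
From Stdlib Require Import Reals ZArith.
Open Scope R_scope.

Definition S1 : Type := {x : R | 0 <= x < 1}.

Definition S1val (x : S1) : R := proj1_sig x.

Definition cdist (x y : S1) : R :=
  Rmin (Rabs (S1val x - S1val y)) (1 - Rabs (S1val x - S1val y)).

Definition S1_continuous (f : S1 -> S1) : Prop :=
  forall (x : S1) (eps : R), 0 < eps ->
    exists delta, 0 < delta /\
      forall y : S1, cdist x y < delta -> cdist (f x) (f y) < eps.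

Definition cyc (x y z : S1) : Prop :=
  let a := S1val x in let b := S1val y in let c := S1val z in
  (a < b < c) \/ (b < c < a) \/ (c < a < b).

Definition homeo_plus (f : S1 -> S1) : Prop :=
  exists finv : S1 -> S1,
    (forall x, finv (f x) = x) /\ (forall y, f (finv y) = y) /\
    S1_continuous f /\ S1_continuous finv /\
    (forall x y z, cyc x y z -> cyc (f x) (f y) (f z)).

Definition has_period (h : S1 -> S1) (x : S1) (k : nat) : Prop :=
  (0 < k)%nat /\ Nat.iter k h x = x /\
  (forall j : nat, (0 < j < k)%nat -> Nat.iter j h x <> x).

(* Main.v *)
Require Import Defs.
From Stdlib Require Import Reals ZArith Lra Lia ProofIrrelevance Classical.
Open Scope R_scope.

Definition fl (x : R) : Z := (up x - 1)%Z.
Definition frac (x : R) : R := x - IZR (fl x).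

Lemma fl_spec x : IZR (fl x) <= x < IZR (fl x) + 1.
Proof. unfold fl. rewrite minus_IZR. destruct (archimed x). lra. Qed.

Lemma frac_range x : 0 <= frac x < 1.
Proof. unfold frac. pose proof (fl_spec x). lra. Qed.

Lemma fl_unique x k : IZR k <= x < IZR k + 1 -> fl x = k.
Proof. intros H. unfold fl.
  assert (k + 1 = up x)%Z; [apply tech_up; rewrite plus_IZR; simpl; lra| lia]. Qed.

Lemma fl_shift x k : fl (x + IZR k) = (fl x + k)%Z.
Proof. apply fl_unique. pose proof (fl_spec x). rewrite plus_IZR. lra. Qed.

Lemma frac_shift x k : frac (x + IZR k) = frac x.
Proof. unfold frac. rewrite fl_shift, plus_IZR. lra. Qed.

Lemma frac_01 v : 0 <= v < 1 -> frac v = v.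
Proof. intros H. unfold frac. rewrite (fl_unique v 0); simpl; lra. Qed.

Lemma fl_mono x y : x <= y -> (fl x <= fl y)%Z.
Proof. intros H. pose proof (fl_spec x); pose proof (fl_spec y).
  destruct (Z_le_gt_dec (fl x) (fl y)); auto.
  assert (fl y + 1 <= fl x)%Z by lia. apply IZR_le in H2. rewrite plus_IZR in H2. lra. Qed.

Definition proj (x : R) : S1 := exist _ (frac x) (frac_range x).

Lemma S1_eq (a b : S1) : S1val a = S1val b -> a = b.
Proof. destruct a as [a Ha], b as [b Hb]; simpl; intros ->. f_equal; apply proof_irrelevance. Qed.

Lemma S1val_range (s : S1) : 0 <= S1val s < 1.
Proof. destruct s; simpl; auto. Qed.

Lemma proj_val s : proj (S1val s) = s.
Proof. apply S1_eq. simpl. apply frac_01, S1val_range. Qed.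

Lemma proj_shift x k : proj (x + IZR k) = proj x.
Proof. apply S1_eq; simpl. apply frac_shift. Qed.

Lemma proj_eq_int a b : proj a = proj b -> exists k, a - b = IZR k.
Proof. intros H. assert (frac a = frac b) by (apply (f_equal S1val) in H; exact H).
  exists (fl a - fl b)%Z. unfold frac in H0. rewrite minus_IZR. lra. Qed.

Lemma proj0_val : S1val (proj 0) = 0.
Proof. simpl. apply frac_01. lra. Qed.

Lemma IZR_half j k : IZR k <> IZR j + /2.
Proof. intros H. assert (0 < IZR (k - j) < 1) by (rewrite minus_IZR; lra).
  destruct H0 as [H1 H2]. apply lt_IZR in H1. apply lt_IZR in H2. lia. Qed.

Lemma per_nat (f : R -> R) s : (forall x, f (x + 1) = f x + s) ->
  forall n x, f (x + INR n) = f x + INR n * s.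
Proof. intros Hf n; induction n as [|n IH]; intros x.
  - simpl. rewrite Rplus_0_r. ring.
  - rewrite S_INR. replace (x + (INR n + 1)) with ((x + INR n) + 1) by ring.
    rewrite Hf, IH. ring. Qed.

Lemma per_int (f : R -> R) s : (forall x, f (x + 1) = f x + s) ->
  forall k x, f (x + IZR k) = f x + IZR k * s.
Proof. intros Hf k x. destruct k as [|p|p].
  - simpl. rewrite Rplus_0_r. ring.
  - rewrite <- positive_nat_Z, <- INR_IZR_INZ. apply per_nat; auto.
  - rewrite <- Pos2Z.opp_pos, opp_IZR, <- positive_nat_Z, <- INR_IZR_INZ.
    pose proof (per_nat f s Hf (Pos.to_nat p) (x + - INR (Pos.to_nat p))) as E.
    replace (x + - INR (Pos.to_nat p) + INR (Pos.to_nat p)) with x in E by ring.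
    lra. Qed.

Definition adj (a v : R) : R := if Rle_dec a v then v else v + 1.

Definition lift (f : S1 -> S1) (x : R) : R :=
  adj (S1val (f (proj 0))) (S1val (f (proj x))) + IZR (fl x).

Lemma adj_range a v : 0 <= a < 1 -> 0 <= v < 1 -> a <= adj a v < a + 1.
Proof. unfold adj; destruct (Rle_dec a v); lra. Qed.

Lemma lift_proj f x : proj (lift f x) = f (proj x).
Proof. apply S1_eq. unfold lift. simpl.
  pose proof (S1val_range (f (proj x))). pose proof (S1val_range (f (proj 0))).
  unfold adj; destruct Rle_dec.
  - rewrite frac_shift. apply frac_01; auto.
  - replace (S1val (f (proj x)) + 1 + IZR (fl x)) with (S1val (f (proj x)) + IZR (fl x + 1))
      by (rewrite plus_IZR; ring).
    rewrite frac_shift. apply frac_01; auto. Qed.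

Lemma lift_per f x : lift f (x + 1) = lift f x + 1.
Proof. unfold lift. change 1 with (IZR 1) at 1 2. rewrite proj_shift, fl_shift, plus_IZR. ring. Qed.

Section Lift.
Variables (f finv : S1 -> S1).
Hypothesis Hl : forall x, finv (f x) = x.
Hypothesis Hr : forall y, f (finv y) = y.
Hypothesis Hc : forall x y z, cyc x y z -> cyc (f x) (f y) (f z).

Let A (s : S1) := adj (S1val (f (proj 0))) (S1val (f s)).

Lemma A_mono s t : S1val s < S1val t -> A s < A t.
Proof. intros Hst. unfold A.
  pose proof (S1val_range s) as Rs. pose proof (S1val_range t) as Rt.
  pose proof (S1val_range (f s)) as Rfs. pose proof (S1val_range (f t)) as Rft.
  pose proof (S1val_range (f (proj 0))) as R0.
  destruct (Req_dec (S1val s) 0) as [E|E].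
  - assert (s = proj 0) by (apply S1_eq; rewrite proj0_val; auto). subst s.
    assert (f t <> f (proj 0)).
    { intros E2. apply (f_equal finv) in E2. rewrite !Hl in E2. subst t. lra. }
    assert (S1val (f t) <> S1val (f (proj 0))) by (intros E3; apply H, S1_eq; auto).
    unfold adj. destruct Rle_dec; destruct Rle_dec; lra.
  - assert (cyc (proj 0) s t) by (unfold cyc; rewrite proj0_val; left; lra).
    apply Hc in H. unfold cyc in H.
    unfold adj. destruct Rle_dec; destruct Rle_dec; lra. Qed.

Lemma lift_mono x y : x < y -> lift f x < lift f y.
Proof. intros Hxy. unfold lift.
  pose proof (fl_mono x y (Rlt_le _ _ Hxy)) as Hm.
  pose proof (fl_spec x); pose proof (fl_spec y).
  pose proof (S1val_range (f (proj 0))) as R0.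
  pose proof (adj_range _ _ R0 (S1val_range (f (proj x)))).
  pose proof (adj_range _ _ R0 (S1val_range (f (proj y)))).
  destruct (Z.eq_dec (fl x) (fl y)) as [E|E].
  - rewrite E. apply Rplus_lt_compat_r. apply A_mono. simpl. unfold frac. rewrite E. lra.
  - assert (Hz : (fl x + 1 <= fl y)%Z) by lia. apply IZR_le in Hz. rewrite plus_IZR in Hz. lra. Qed.

Lemma lift_int k x : lift f (x + IZR k) = lift f x + IZR k.
Proof. rewrite (per_int (lift f) 1 (lift_per f)). ring. Qed.

Lemma lift_surj w : exists x, lift f x = w.
Proof. set (s := finv (proj w)). set (t := S1val s).
  assert (Ht : proj t = s) by apply proj_val.
  pose proof (S1val_range s) as Rs.
  assert (fl t = 0%Z) by (apply fl_unique; simpl; unfold t; lra).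
  assert (lift f t = adj (S1val (f (proj 0))) (frac w)).
  { unfold lift. rewrite Ht, H. unfold s. rewrite Hr. simpl. ring. }
  unfold adj in H0. pose proof (fl_spec w). unfold frac in H0.
  destruct Rle_dec.
  - exists (t + IZR (fl w)). rewrite lift_int, H0. ring.
  - exists (t + IZR (fl w - 1)). rewrite lift_int, H0, minus_IZR. ring. Qed.

Lemma lift_cont : continuity (lift f).
Proof. intros x. unfold continuity_pt, continue_in, limit1_in, limit_in. simpl. unfold R_dist.
  intros eps Heps.
  destruct (lift_surj (lift f x + eps)) as [y1 Hy1].
  destruct (lift_surj (lift f x - eps)) as [y0 Hy0].
  assert (x < y1). { destruct (Rlt_le_dec x y1); auto. destruct (Req_dec y1 x). subst; lra.
    pose proof (lift_mono y1 x). lra. }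
  assert (y0 < x). { destruct (Rlt_le_dec y0 x); auto. destruct (Req_dec y0 x). subst; lra.
    pose proof (lift_mono x y0). lra. }
  exists (Rmin (y1 - x) (x - y0)). split. apply Rmin_pos; lra.
  intros z [_ Hz]. pose proof (Rmin_l (y1 - x) (x - y0)). pose proof (Rmin_r (y1 - x) (x - y0)).
  apply Rabs_def2 in Hz. destruct Hz.
  pose proof (lift_mono z y1 ltac:(lra)). pose proof (lift_mono y0 z ltac:(lra)).
  apply Rabs_def1; lra. Qed.

End Lift.

Lemma cyc_inv (f finv : S1 -> S1) :
  (forall x, finv (f x) = x) -> (forall y, f (finv y) = y) ->
  (forall x y z, cyc x y z -> cyc (f x) (f y) (f z)) ->
  (forall x y z, cyc x y z -> cyc (finv x) (finv y) (finv z)).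
Proof. intros Hl Hr Hc x y z H.
  assert (Hd : forall u v, S1val (finv u) = S1val (finv v) -> u = v).
  { intros u v E. apply S1_eq in E. rewrite <- (Hr u), <- (Hr v), E. auto. }
  assert (Nxy : S1val x <> S1val y) by (unfold cyc in H; lra).
  assert (Nyz : S1val y <> S1val z) by (unfold cyc in H; lra).
  assert (Nxz : S1val x <> S1val z) by (unfold cyc in H; lra).
  assert (A1 : S1val (finv x) <> S1val (finv y)) by (intros E; apply Nxy; rewrite (Hd _ _ E); auto).
  assert (A2 : S1val (finv y) <> S1val (finv z)) by (intros E; apply Nyz; rewrite (Hd _ _ E); auto).
  assert (A3 : S1val (finv x) <> S1val (finv z)) by (intros E; apply Nxz; rewrite (Hd _ _ E); auto).
  destruct (classic (cyc (finv x) (finv y) (finv z))) as [C|C]; auto.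
  assert (cyc (finv x) (finv z) (finv y)).
  { unfold cyc in *. set (a := S1val (finv x)) in *. set (b := S1val (finv y)) in *.
    set (c := S1val (finv z)) in *.
    destruct (Rlt_dec a b); destruct (Rlt_dec b c); destruct (Rlt_dec a c); lra. }
  apply Hc in H0. rewrite !Hr in H0. exfalso. unfold cyc in H, H0. lra. Qed.

Lemma Rabs_le_inv a b : Rabs a <= b -> - b <= a <= b.
Proof. unfold Rabs; destruct Rcase_abs; lra. Qed.

Lemma Rabs_bounds y : - Rabs y <= y <= Rabs y.
Proof. unfold Rabs; destruct Rcase_abs; lra. Qed.

Lemma cont_sub_const f t : continuity f -> continuity (fun x => f x - t).
Proof. intros Hf x. apply continuity_pt_minus; [apply Hf|apply continuity_pt_const; intros ??; auto]. Qed.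

Lemma ivt_any f a b t : continuity f -> (f a - t) * (f b - t) <= 0 -> exists z, f z = t.
Proof. intros Hf Hp. destruct (Rle_dec a b).
  - destruct (IVT_cor (fun x => f x - t) a b (cont_sub_const f t Hf) r Hp) as [z [_ Hz]].
    exists z; lra.
  - assert ((f b - t) * (f a - t) <= 0) by lra.
    destruct (IVT_cor (fun x => f x - t) b a (cont_sub_const f t Hf) ltac:(lra) H) as [z [_ Hz]].
    exists z; lra. Qed.

Lemma int_valued_const psi : continuity psi -> (forall x, exists k, psi x = IZR k) ->
  forall x, psi x = psi 0.
Proof. intros Hc Hi x. destruct (Hi 0) as [j Hj]. destruct (Hi x) as [k Hk].
  destruct (Z.eq_dec k j) as [->|Ne]. congruence. exfalso.
  destruct (Z_lt_le_dec j k).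
  - assert (IZR j + 1 <= IZR k) by (rewrite <- plus_IZR; apply IZR_le; lia).
    destruct (ivt_any psi 0 x (IZR j + /2) Hc) as [z Hz]. rewrite Hj, Hk. nra.
    destruct (Hi z) as [l0 Hl]. apply (IZR_half j l0). congruence.
  - assert (IZR k + 1 <= IZR j) by (rewrite <- plus_IZR; apply IZR_le; lia).
    destruct (ivt_any psi 0 x (IZR (j-1) + /2) Hc) as [z Hz]. rewrite Hj, Hk, minus_IZR. nra.
    destruct (Hi z) as [l0 Hl]. apply (IZR_half (j-1) l0). congruence. Qed.

Lemma bounded_periodic psi : continuity psi -> (forall x, psi (x + 1) = psi x) ->
  exists a b, forall x, psi a <= psi x <= psi b.
Proof. intros Hc Hp.
  destruct (continuity_ab_maj psi 0 1 ltac:(lra) (fun c _ => Hc c)) as [b [Hb _]].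
  destruct (continuity_ab_min psi 0 1 ltac:(lra) (fun c _ => Hc c)) as [a [Ha _]].
  exists a, b. intros x.
  assert (psi x = psi (frac x)).
  { assert (Hp' : forall y, psi (y + 1) = psi y + 0) by (intros; rewrite Hp; ring).
    pose proof (per_int psi 0 Hp' (fl x) (frac x)). unfold frac in *.
    replace (x - IZR (fl x) + IZR (fl x)) with x in H by ring. lra. }
  pose proof (frac_range x). rewrite H. split; [apply Ha|apply Hb]; lra. Qed.

Section Core.
Variables (m d : nat) (H G : R -> R).
Hypothesis Hd : (0 < d)%nat.
Hypothesis HHc : continuity H.
Hypothesis HGc : continuity G.
Hypothesis HHm : forall x y, x <= y -> H x <= H y.
Hypothesis HHp : forall x, H (x + 1) = H x + 1.
Hypothesis HGp : forall x, G (x + 1) = G x + 1.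
Hypothesis Hconj : forall x, exists k, G (Nat.iter m H x) - Nat.iter (d + m) H (G x) = IZR k.
Hypothesis Hnofix : forall x k, Nat.iter d H x - x <> IZR k.

Lemma iter_cont j : continuity (fun x => Nat.iter j H x).
Proof. induction j as [|j IH]; simpl. apply derivable_continuous, derivable_id.
  change (continuity (comp H (fun x => Nat.iter j H x))). apply continuity_comp; auto. Qed.

Lemma iter_per j x : Nat.iter j H (x + 1) = Nat.iter j H x + 1.
Proof. induction j; simpl; auto. rewrite IHj; auto. Qed.

Lemma iter_int j k x : Nat.iter j H (x + IZR k) = Nat.iter j H x + IZR k.
Proof. rewrite (per_int (fun y => Nat.iter j H y) 1 (iter_per j)). ring. Qed.

Lemma iter_mono j x y : x <= y -> Nat.iter j H x <= Nat.iter j H y.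
Proof. induction j; simpl; auto. Qed.

Lemma iter_close j K x y : Rabs (y - x) <= IZR K ->
  Rabs (Nat.iter j H y - Nat.iter j H x) <= IZR K.
Proof. intros Hk. apply Rabs_le_inv in Hk.
  pose proof (iter_mono j y (x + IZR K) ltac:(lra)).
  pose proof (iter_mono j (x + - IZR K) y ltac:(lra)).
  rewrite iter_int in H0. rewrite <- opp_IZR, iter_int, opp_IZR in H1.
  apply Rabs_le; lra. Qed.

Lemma core_false : False.
Proof.
  set (psi := fun x => G (Nat.iter m H x) - Nat.iter (d + m) H (G x)).
  assert (Cpsi : continuity psi).
  { apply continuity_minus. change (continuity (comp G (fun x => Nat.iter m H x))).
    apply continuity_comp; auto. apply iter_cont.
    change (continuity (comp (fun x => Nat.iter (d+m) H x) G)). apply continuity_comp; auto. apply iter_cont. }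
  destruct (Hconj 0) as [c Hc0].
  assert (Hc : forall x, G (Nat.iter m H x) = Nat.iter (d + m) H (G x) + IZR c).
  { intros x. pose proof (int_valued_const psi Cpsi Hconj x). unfold psi in H0 at 2. rewrite Hc0 in H0.
    unfold psi in H0. lra. }
  set (phi := fun x => Nat.iter d H x - x).
  assert (Cphi : continuity phi) by (apply continuity_minus; [apply iter_cont|apply derivable_continuous, derivable_id]).
  assert (Pphi : forall x, phi (x + 1) = phi x) by (intros; unfold phi; rewrite iter_per; ring).
  set (p := fl (phi 0)).
  assert (Hp0 : IZR p < phi 0 < IZR p + 1).
  { pose proof (fl_spec (phi 0)). fold p in H0. destruct (Req_dec (IZR p) (phi 0)).
    exfalso. apply (Hnofix 0 p). unfold phi in H1. lra. lra. }
  assert (Hpx : forall x, IZR p < phi x < IZR p + 1).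
  { intros x. destruct (Rlt_le_dec (IZR p) (phi x)).
    - destruct (Rlt_le_dec (phi x) (IZR p + 1)). lra. exfalso.
      destruct (ivt_any phi 0 x (IZR (p + 1)) Cphi) as [z Hz]. rewrite plus_IZR; nra.
      apply (Hnofix z (p+1)). unfold phi in Hz. lra.
    - exfalso. destruct (ivt_any phi 0 x (IZR p) Cphi) as [z Hz]. nra.
      apply (Hnofix z p). unfold phi in Hz. lra. }
  destruct (bounded_periodic phi Cphi Pphi) as [a [b Hab]].
  set (eps := Rmin (phi a - IZR p) (IZR p + 1 - phi b)).
  assert (Heps : 0 < eps) by (apply Rmin_pos; pose proof (Hpx a); pose proof (Hpx b); lra).
  assert (Hlo : forall x, IZR p + eps <= phi x).
  { intros x. pose proof (Hab x). pose proof (Rmin_l (phi a - IZR p) (IZR p + 1 - phi b)). fold eps in H1. lra. }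
  assert (Hhi : forall x, phi x <= IZR p + 1 - eps).
  { intros x. pose proof (Hab x). pose proof (Rmin_r (phi a - IZR p) (IZR p + 1 - phi b)). fold eps in H1. lra. }
  assert (Disp : forall N x, INR N * (IZR p + eps) <= Nat.iter (d * N) H x - x <= INR N * (IZR p + 1 - eps)).
  { induction N as [|N IH]; intros x.
    - rewrite Nat.mul_0_r. simpl. lra.
    - replace (d * S N)%nat with (d + d * N)%nat by lia. rewrite Nat.iter_add, S_INR.
      pose proof (IH x). pose proof (Hlo (Nat.iter (d * N) H x)). pose proof (Hhi (Nat.iter (d * N) H x)).
      unfold phi in H1, H2. lra. }
  assert (ConjN : forall N x, G (Nat.iter (m * N) H x) = Nat.iter ((d + m) * N) H (G x) + INR N * IZR c).
  { induction N as [|N IH]; intros x.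
    - rewrite !Nat.mul_0_r. simpl Nat.iter. simpl INR. ring.
    - replace (m * S N)%nat with (m + m * N)%nat by lia.
      replace ((d + m) * S N)%nat with ((d + m) + (d + m) * N)%nat by lia.
      rewrite (Nat.iter_add m (m * N)), (Nat.iter_add (d + m) ((d + m) * N)), Hc, IH, S_INR.
      replace (INR N * IZR c) with (IZR (Z.of_nat N * c)) by (rewrite mult_IZR, <- INR_IZR_INZ; ring).
      rewrite iter_int, mult_IZR, <- INR_IZR_INZ. ring. }
  set (beta := fun x => G x - x).
  assert (Cbeta : continuity beta) by (apply continuity_minus; [auto|apply derivable_continuous, derivable_id]).
  assert (Pbeta : forall x, beta (x + 1) = beta x) by (intros; unfold beta; rewrite HGp; ring).
  destruct (bounded_periodic beta Cbeta Pbeta) as [a' [b' Hab']].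
  set (K := up (Rabs (beta a') + Rabs (beta b'))).
  assert (HK : forall x, Rabs (G x - x) <= IZR K).
  { intros x. pose proof (Hab' x). destruct (archimed (Rabs (beta a') + Rabs (beta b'))). fold K in H1.
    unfold beta in *. apply Rabs_le. pose proof (Rabs_bounds (G a' - a')). pose proof (Rabs_bounds (G b' - b')).
    lra. }
  assert (HK0 : 0 <= IZR K) by (pose proof (HK 0); pose proof (Rabs_pos (G 0 - 0)); lra).
  set (Nz := up (2 * IZR K / eps)).
  assert (HNz : 2 * IZR K / eps < IZR Nz) by (apply archimed).
  assert (Nz0 : (0 <= Nz)%Z).
  { apply le_IZR. assert (0 <= 2 * IZR K / eps) by (apply Rmult_le_pos; [lra|left; apply Rinv_0_lt_compat; lra]). lra. }
  set (N := Z.to_nat Nz).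
  assert (HN : INR N = IZR Nz) by (unfold N; rewrite INR_IZR_INZ, Z2Nat.id; auto).
  assert (HNe : 2 * IZR K < INR N * eps).
  { rewrite HN. apply (Rmult_lt_compat_r eps) in HNz; auto.
    unfold Rdiv in HNz. rewrite Rmult_assoc, Rinv_l in HNz; lra. }
  set (u := Nat.iter (m * N) H 0).
  set (v := Nat.iter (m * N) H (G 0)).
  assert (Huv : Rabs (v - u) <= IZR K) by (apply iter_close; pose proof (HK 0); auto).
  pose proof (ConjN N 0) as E. fold u in E.
  replace ((d + m) * N)%nat with (d * N + m * N)%nat in E by lia.
  rewrite Nat.iter_add in E. fold v in E.
  pose proof (Disp N v) as D.
  pose proof (HK u) as Gu.
  apply Rabs_le_inv in Huv. apply Rabs_le_inv in Gu.
  destruct (Z_le_gt_dec 0 (c + p)) as [Cp|Cp].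
  - assert (0 <= INR N * (IZR c + IZR p)) by (apply Rmult_le_pos; [apply pos_INR| rewrite <- plus_IZR; apply IZR_le; auto]).
    nra.
  - assert (IZR c + IZR p <= -1) by (rewrite <- plus_IZR; apply IZR_le; lia).
    assert (INR N * (IZR c + IZR p + 1) <= 0) by (pose proof (pos_INR N); nra).
    nra.
Qed.

End Core.

Lemma lift_iter_proj (h : S1 -> S1) j x :
  proj (Nat.iter j (lift h) x) = Nat.iter j h (proj x).
Proof. induction j; simpl; auto. rewrite lift_proj, IHj. auto. Qed.

Lemma circle_core (m d : nat) (phi phiinv h hinv : S1 -> S1) :
  (0 < d)%nat ->
  (forall x, phiinv (phi x) = x) -> (forall y, phi (phiinv y) = y) ->
  (forall x, hinv (h x) = x) -> (forall y, h (hinv y) = y) ->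
  (forall x y z, cyc x y z -> cyc (phi x) (phi y) (phi z)) ->
  (forall x y z, cyc x y z -> cyc (h x) (h y) (h z)) ->
  (forall x, phi (Nat.iter m h (phiinv x)) = Nat.iter (d + m) h x) ->
  exists y, Nat.iter d h y = y.
Proof. intros Hd Pl Pr Hl Hr Pc Hc Hrel.
  apply NNPP. intros Hno.
  apply (core_false m d (lift h) (lift phi)); auto.
  - apply (lift_cont h hinv); auto.
  - apply (lift_cont phi phiinv); auto.
  - intros x y Hxy. destruct (Req_dec x y). subst; lra. left. apply (lift_mono h hinv); auto. lra.
  - apply lift_per.
  - apply lift_per.
  - intros x. apply proj_eq_int.
    rewrite lift_proj, lift_iter_proj, lift_iter_proj, lift_proj, <- Hrel, Pl. auto.
  - intros x k E. apply Hno. exists (proj x).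
    rewrite <- lift_iter_proj. replace (Nat.iter d (lift h) x) with (x + IZR k) by lra.
    apply proj_shift. Qed.

Lemma iter_mult {A} (f : A -> A) y k q : Nat.iter k f y = y -> Nat.iter (k * q) f y = y.
Proof. intros H. induction q. rewrite Nat.mul_0_r; auto.
  replace (k * S q)%nat with (k + k * q)%nat by lia. rewrite Nat.iter_add, IHq; auto. Qed.

Lemma least_period (h : S1 -> S1) y d : (0 < d)%nat -> Nat.iter d h y = y ->
  exists k, has_period h y k /\ (Z.of_nat k | Z.of_nat d)%Z.
Proof. intros Hd Hy.
  assert (Hmin : forall n, (0 < n)%nat -> Nat.iter n h y = y ->
     exists k, (0 < k)%nat /\ Nat.iter k h y = y /\ (forall j, (0 < j < k)%nat -> Nat.iter j h y <> y)).
  { induction n as [n IH] using (well_founded_induction Nat.lt_wf_0).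
    intros Hn Hny. destruct (classic (exists j, (0 < j < n)%nat /\ Nat.iter j h y = y)) as [[j [Hj Hjy]]|No].
    - apply (IH j); tauto.
    - exists n. split; auto. split; auto. intros j Hj E. apply No. exists j. auto. }
  destruct (Hmin d Hd Hy) as [k [Hk [Hky Hkm]]].
  exists k. split. split; auto.
  pose proof (Nat.div_mod d k ltac:(lia)) as E.
  pose proof (Nat.mod_upper_bound d k ltac:(lia)).
  set (r := (d mod k)%nat) in *. set (q := (d / k)%nat) in *.
  assert (Nat.iter r h y = y).
  { rewrite <- Hy at 2. rewrite E, Nat.add_comm, Nat.iter_add, iter_mult; auto. }
  destruct (Nat.eq_dec r 0) as [R0|R0].
  - exists (Z.of_nat q). rewrite E, R0. lia.
  - exfalso. apply (Hkm r); auto. lia. Qed.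

Theorem lemma5p5 (m n : nat) (g ginv h : S1 -> S1) :
  (0 < m)%nat -> (0 < n)%nat -> m <> n ->
  homeo_plus g -> homeo_plus h ->
  (forall x, ginv (g x) = x) -> (forall y, g (ginv y) = y) ->
  (forall x, g (Nat.iter m h (ginv x)) = Nat.iter n h x) ->
  exists (x : S1) (k : nat), has_period h x k /\
    (Z.of_nat k | Z.abs (Z.of_nat n - Z.of_nat m))%Z.
Proof.
  intros Hm Hn Hmn [gi [_ [_ [_ [_ Gc]]]]] [hinv [Hl [Hr [_ [_ Hc]]]]] Gl Gr Hrel.
  destruct (Nat.lt_total m n) as [Lt|[Gt|Gt]].
  - destruct (circle_core m (n - m) g ginv h hinv) as [y Hy]; auto. lia.
    intros x. replace (n - m + m)%nat with n by lia. auto.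
    destruct (least_period h y (n - m) ltac:(lia) Hy) as [k [Hk Hdiv]].
    exists y, k. split; auto.
    replace (Z.abs (Z.of_nat n - Z.of_nat m)) with (Z.of_nat (n - m)) by lia. auto.
  - exfalso; auto.
  - destruct (circle_core n (m - n) ginv g h hinv) as [y Hy]; auto. lia.
    apply (cyc_inv g ginv); auto.
    intros x. replace (m - n + n)%nat with m by lia.
    rewrite <- Hrel, Gl, Gl. auto.
    destruct (least_period h y (m - n) ltac:(lia) Hy) as [k [Hk Hdiv]].
    exists y, k. split; auto.
    replace (Z.abs (Z.of_nat n - Z.of_nat m)) with (Z.of_nat (m - n)) by lia. auto.
Qed.
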